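(* Let $\Omega$ be a domain, $G\subset\mathbb{C}$ a closed set with empty interior, $\Phi=(\phi_n)_n$ a sequence of continuous mappings from $G$ to $\Omega$, and $\mathcal{M}$ a countable family of compact subsets of $G$. If there exists a $(\Phi,\mathcal{M})$-universal function in $H(\Omega)$, then for any compact set $L\subset\Omega$, any $K\in\mathcal{M}$ and any disjoint $I_1,I_2\in\mathcal{M}$ with $K\cup I_1\cup I_2\in\mathcal{M}$, there exist infinitely many $n\in\mathbb{N}$ such that both $\phi_n(K)\cap L=\emptyset$ and $\phi_n(I_1)\cap\phi_n(I_2)=\emptyset$.
   Context: $H(\Omega)$ is the Fréchet space of holomorphic functions on $\Omega$ with the locally uniform topology; $\mathcal{C}(K)$ is the Banach space of continuous functions on $K$ with the sup norm. $f\in H(\Omega)$ is $(\Phi,\mathcal{M})$-universal if for every $K\in\mathcal{M}$ the set $\{f\circ\phi_n|_K:\,n\in\mathbb{N}\}$ is dense in $\mathcal{C}(K)$. *)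

(* Defs.v *)
From Stdlib Require Import Reals List.
From Coquelicot Require Import Coquelicot.
Open Scope R_scope.

Definition Ccompact (K : C -> Prop) : Prop :=
  forall (I : Type) (U : I -> C -> Prop),
    (forall i, open (U i)) ->
    (forall z, K z -> exists i, U i z) ->
    exists l : list I, forall z, K z -> exists i, In i l /\ U i z.

Definition Cdomain (Om : C -> Prop) : Prop :=
  open Om /\ (exists z, Om z) /\
  forall A B : C -> Prop, open A -> open B ->
    (forall z, Om z -> A z \/ B z) ->
    (forall z, Om z -> A z -> B z -> False) ->
    (exists z, Om z /\ A z) -> (exists z, Om z /\ B z) -> False.

Definition empty_interior (G : C -> Prop) : Prop :=
  forall U : C -> Prop, open U -> (forall z, U z -> G z) -> forall z, ~ U z.

Definition continuous_on_set (A : C -> Prop) (h : C -> C) : Prop :=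
  forall z, A z -> forall eps : R, 0 < eps -> exists delta : R, 0 < delta /\
    forall w, A w -> Cmod (w - z) < delta -> Cmod (h w - h z) < eps.

Definition holomorphic_on (Om : C -> Prop) (f : C -> C) : Prop :=
  forall z, Om z -> @ex_derive C_AbsRing C_NormedModule f z.

Definition countable_family (M : (C -> Prop) -> Prop) : Prop :=
  exists h : (C -> Prop) -> nat, forall A B, M A -> M B -> h A = h B -> A = B.

(* (Phi, M)-universality: for each K in M, {f o phi_n |_K} is dense in C(K)
   for the sup norm. *)
Definition universal (f : C -> C) (phi : nat -> C -> C)
  (M : (C -> Prop) -> Prop) : Prop :=
  forall K, M K -> forall g : C -> C, continuous_on_set K g ->
    forall eps : R, 0 < eps ->
      exists n : nat, forall z, K z -> Cmod (f (phi n z) - g z) < eps.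

(* Main.v *)
Require Import Defs.
From Stdlib Require Import Reals List Lia Lra Classical.
From Coquelicot Require Import Coquelicot.
Open Scope R_scope.
Lemma in_le_sum (l : list nat) i : In i l -> (i <= list_sum l)%nat.
Proof. induction l; simpl; [tauto|]. intros [->|H]; [lia|]. specialize (IHl H); lia. Qed.

Lemma Cmod_sub_tri (u v w : C) : Cmod (u - w) <= Cmod (u - v) + Cmod (v - w).
Proof. replace (u - w)%C with ((u - v) + (v - w))%C by ring. apply Cmod_triangle. Qed.

Lemma open_ball_prop (Q : C -> Prop) :
  open (fun w => exists r, 0 < r /\ forall v, Cmod (v - w) < r -> Q v).
Proof.
  intros w [r [Hr Hv]]. apply (@locally_le_locally_norm C_AbsRing C_NormedModule).
  exists (mkposreal (r/2) ltac:(lra)). intros v Hb.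
  assert (Hb' : Cmod (v - w) < r/2) by exact Hb.
  exists (r/2). split; [lra|]. intros u Hu. apply Hv.
  pose proof (Cmod_sub_tri u v w). lra.
Qed.
Lemma compact_unif (K : C -> Prop) (P : nat -> C -> Prop) :
  Ccompact K ->
  (forall k k' v, (k <= k')%nat -> P k v -> P k' v) ->
  (forall z, K z -> exists k r, 0 < r /\ forall v, Cmod (v - z) < r -> P k v) ->
  exists k, forall z, K z -> P k z.
Proof.
  intros HK Hm Hl.
  destruct (HK nat (fun k w => exists r, 0 < r /\ forall v, Cmod (v - w) < r -> P k v)) as [l Hl'].
  - intros k. apply open_ball_prop.
  - intros z Hz. destruct (Hl z Hz) as [k [r Hr]]. exists k, r. exact Hr.
  - exists (list_sum l). intros z Hz. destruct (Hl' z Hz) as [i [Hi [r [Hr Hv]]]].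
    apply Hm with i. apply in_le_sum; auto. apply Hv.
    replace (z - z)%C with (RtoC 0) by ring. rewrite Cmod_0. lra.
Qed.
Lemma Cmod_sym (a b : C) : Cmod (a - b) = Cmod (b - a).
Proof. replace (a - b)%C with (- (b - a))%C by ring. apply Cmod_opp. Qed.

Lemma Cmod_split (a b : C) : Cmod a <= Cmod b + Cmod (a - b).
Proof. replace a with (b + (a - b))%C at 1 by ring. apply Cmod_triangle. Qed.

Lemma inv_small (d : R) : 0 < d -> exists k : nat, / (INR k + 1) < d.
Proof.
  intros Hd. destruct (INR_archimed d 1) as [k Hk]; [lra|].
  exists k. pose proof (pos_INR k).
  apply (Rmult_lt_reg_l (INR k + 1)); [lra|]. rewrite Rinv_r; [|lra]. nra.
Qed.

Lemma inv_mono (k k' : nat) : (k <= k')%nat -> / (INR k' + 1) <= / (INR k + 1).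
Proof.
  intros H. apply le_INR in H. pose proof (pos_INR k).
  apply Rinv_le_contravar; lra.
Qed.

Lemma dist_pt (I2 : C -> Prop) (w : C) : Ccompact I2 -> ~ I2 w ->
  exists k, forall u, I2 u -> / (INR k + 1) < Cmod (u - w).
Proof.
  intros HI Hw.
  apply (compact_unif I2 (fun k u => / (INR k + 1) < Cmod (u - w))); auto.
  - intros k k' v Hk H. pose proof (inv_mono k k' Hk). lra.
  - intros u Hu. set (d := Cmod (u - w)).
    assert (Hd : 0 < d). { apply Cmod_gt_0. intros H. apply Hw.
      replace w with u; auto. replace u with ((u - w) + w)%C by ring. rewrite H. ring. }
    destruct (inv_small (d/2)) as [k Hk]; [lra|].
    exists k, (d/2). split; [lra|]. intros v Hv.
    pose proof (Cmod_split (u - w) (v - w)).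
    replace (u - w - (v - w))%C with (u - v)%C in H by ring.
    rewrite (Cmod_sym u v) in H. fold d in H. lra.
Qed.

Lemma dist_cc (I1 I2 : C -> Prop) : Ccompact I1 -> Ccompact I2 ->
  (forall z, I1 z -> I2 z -> False) ->
  exists k, forall w u, I1 w -> I2 u -> / (INR k + 1) < Cmod (u - w).
Proof.
  intros H1 H2 Hd.
  destruct (compact_unif I1 (fun k w => I1 w -> forall u, I2 u -> / (INR k + 1) < Cmod (u - w)) H1) as [k Hk].
  - intros k k' v Hkk H Hv u Hu. pose proof (inv_mono k k' Hkk). specialize (H Hv u Hu). lra.
  - intros w Hw. destruct (dist_pt I2 w H2) as [k0 Hk0]. { intro. eapply Hd; eauto. }
    set (e := / (INR k0 + 1)).
    assert (He : 0 < e). { unfold e. pose proof (pos_INR k0). apply Rinv_0_lt_compat. lra. }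
    destruct (inv_small (e/2)) as [k Hk]; [lra|].
    exists k, (e/2). split; [lra|]. intros v Hv _ u Hu.
    specialize (Hk0 u Hu). fold e in Hk0.
    pose proof (Cmod_split (u - w) (u - v)).
    replace (u - w - (u - v))%C with (v - w)%C in H by ring. lra.
  - exists k. intros w u Hw Hu. exact (Hk w Hw Hw u Hu).
Qed.
Lemma nat_above (r : R) : exists k : nat, r < INR k.
Proof. destruct (INR_archimed 1 r) as [k Hk]; [lra|]. exists k. lra. Qed.

Lemma bound_f (L Om : C -> Prop) (f : C -> C) :
  (forall z, Om z -> @ex_derive C_AbsRing C_NormedModule f z) ->
  Ccompact L -> (forall z, L z -> Om z) ->
  exists k : nat, forall z, L z -> Cmod (f z) < INR k.
Proof.
  intros Hf HL HLO.
  destruct (compact_unif L (fun k v => L v -> Cmod (f v) < INR k) HL) as [k Hk].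
  - intros k k' v Hkk H Hv. apply le_INR in Hkk. specialize (H Hv). lra.
  - intros z Hz. pose proof (ex_derive_continuous f z (Hf z (HLO z Hz))) as Hc.
    assert (H1 : locally (f z) (fun y : C => Cmod (y - f z) < 1)).
    { apply (@locally_le_locally_norm C_AbsRing C_NormedModule).
      exists (mkposreal 1 Rlt_0_1). intros y Hy. exact Hy. }
    specialize (Hc _ H1).
    unfold filtermap in Hc. simpl in Hc.
    idtac.
    idtac.
    destruct Hc as [eps Heps].
    destruct (nat_above (Cmod (f z) + 1)) as [k Hk].
    exists k, eps. split; [apply cond_pos|]. intros v Hv _.
    specialize (Heps v Hv). simpl in Heps.
    pose proof (Cmod_split (f v) (f z)). lra.
  - exists k. intros z Hz. exact (Hk z Hz Hz).
Qed.

Lemma bound_id (J : C -> Prop) : Ccompact J -> exists k : nat, forall z, J z -> Cmod z < INR k.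
Proof.
  intros HJ. apply (compact_unif J (fun k v => Cmod v < INR k) HJ).
  - intros k k' v Hkk H. apply le_INR in Hkk. lra.
  - intros z Hz. destruct (nat_above (Cmod z + 1)) as [k Hk].
    exists k, 1. split; [lra|]. intros v Hv.
    pose proof (Cmod_split v z). lra.
Qed.


Lemma univ_tail (f : C -> C) (phi : nat -> C -> C) (J : C -> Prop) (z0 : C) :
  J z0 ->
  (forall g, continuous_on_set J g -> forall eps, 0 < eps ->
     exists n, forall z, J z -> Cmod (f (phi n z) - g z) < eps) ->
  forall N g, continuous_on_set J g -> forall eps, 0 < eps ->
     exists n, (N <= n)%nat /\ forall z, J z -> Cmod (f (phi n z) - g z) < eps.
Proof.
  intros Hz0 Hu N. induction N as [|N IH]; intros g Hg eps Heps.
  - destruct (Hu g Hg eps Heps) as [n Hn]. exists n. split; [lia|auto].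
  - assert (Hc : exists c : R, 0 <= c <= eps/4 /\
        eps/8 <= Cmod (f (phi N z0) - (g z0 + RtoC c))).
    { destruct (Rle_lt_dec (eps/8) (Cmod (f (phi N z0) - g z0))) as [Ha|Ha].
      - exists 0. split; [lra|]. replace (g z0 + RtoC 0)%C with (g z0) by ring. exact Ha.
      - exists (eps/4). split; [lra|].
        pose proof (Cmod_split (RtoC (eps/4)) (f (phi N z0) - g z0)%C) as H.
        rewrite Cmod_R, Rabs_right in H by lra.
        replace (RtoC (eps / 4) - (f (phi N z0) - g z0))%C
          with (- (f (phi N z0) - (g z0 + RtoC (eps/4))))%C in H by ring.
        rewrite Cmod_opp in H. lra. }
    destruct Hc as [c [Hc1 Hc2]].
    assert (Hg' : continuous_on_set J (fun z => (g z + RtoC c)%C)).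
    { intros z Hz e He. destruct (Hg z Hz e He) as [d [Hd H]]. exists d. split; auto.
      intros w Hw Hwz. replace (g w + RtoC c - (g z + RtoC c))%C with (g w - g z)%C by ring.
      auto. }
    destruct (IH _ Hg' (eps/8)) as [n [Hn Happ]]; [lra|].
    exists n. split.
    + destruct (Nat.eq_dec n N) as [->|Hne]; [|lia].
      specialize (Happ z0 Hz0). lra.
    + intros z Hz. specialize (Happ z Hz).
      pose proof (Cmod_split (f (phi n z) - g z)%C (f (phi n z) - (g z + RtoC c))%C) as H.
      replace (f (phi n z) - g z - (f (phi n z) - (g z + RtoC c)))%C with (RtoC c) in H by ring.
      rewrite Cmod_R, Rabs_right in H by lra. lra.
Qed.
Theorem mainTheorem13
  (Om G : C -> Prop) (phi : nat -> C -> C) (M : (C -> Prop) -> Prop)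
  (HOm : Cdomain Om)
  (HGc : closed G) (HGi : empty_interior G)
  (Hphi : forall n z, G z -> Om (phi n z))
  (Hphic : forall n, continuous_on_set G (phi n))
  (HMc : countable_family M)
  (HMK : forall K, M K -> Ccompact K /\ (forall z, K z -> G z))
  (Huniv : exists f : C -> C, holomorphic_on Om f /\ universal f phi M) :
  forall L K I1 I2 : C -> Prop,
    Ccompact L -> (forall z, L z -> Om z) ->
    M K -> M I1 -> M I2 -> (forall z, I1 z -> I2 z -> False) ->
    M (fun z => K z \/ I1 z \/ I2 z) ->
    forall N : nat, exists n : nat, (N <= n)%nat /\
      (forall z, K z -> ~ L (phi n z)) /\
      (forall z w, I1 z -> I2 w -> phi n z <> phi n w).
Proof.
  intros L K I1 I2 HL HLO HK HI1 HI2 Hdisj HJ N.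
  destruct Huniv as [f [Hf Hu]].
  destruct (classic (exists z0, K z0 \/ I1 z0 \/ I2 z0)) as [[z0 Hz0]|Hne].
  2:{ exists N. split; [lia|]. split.
      - intros z Hz. exfalso. apply Hne. eauto.
      - intros z w Hz. exfalso. apply Hne. eauto. }
  destruct (bound_f L Om f Hf HL HLO) as [kL HkL].
  destruct (bound_id _ (proj1 (HMK _ HJ))) as [kJ HkJ].
  destruct (dist_cc I1 I2 (proj1 (HMK _ HI1)) (proj1 (HMK _ HI2)) Hdisj) as [kd Hkd].
  set (A := INR kL + INR kJ + 2).
  set (eps := / (2 * (INR kd + 1))).
  pose proof (pos_INR kd) as Hkd0.
  assert (Heps : 0 < eps) by (unfold eps; apply Rinv_0_lt_compat; lra).
  assert (Heps1 : eps <= 1/2).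
  { unfold eps. rewrite Rinv_mult. assert (/ (INR kd + 1) <= 1).
    { pose proof (inv_mono 0 kd ltac:(lia)). simpl in H. replace (0+1) with 1 in H by lra.
      rewrite Rinv_1 in H. exact H. }
    lra. }
  assert (Heps2 : 2 * eps = / (INR kd + 1)).
  { unfold eps. rewrite Rinv_mult. field. lra. }
  assert (Hg : continuous_on_set (fun z => K z \/ I1 z \/ I2 z) (fun z => (RtoC A + z)%C)).
  { intros z Hz e He. exists e. split; auto. intros w Hw Hwz.
    replace (RtoC A + w - (RtoC A + z))%C with (w - z)%C by ring. exact Hwz. }
  destruct (univ_tail f phi _ z0 Hz0 (Hu _ HJ) N _ Hg eps Heps) as [n [Hn Happ]].
  exists n. split; [exact Hn|]. split.
  - intros z Hz HLz. specialize (HkL _ HLz).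
    assert (HJz : K z \/ I1 z \/ I2 z) by auto.
    specialize (Happ z HJz). specialize (HkJ z HJz).
    pose proof (Cmod_split (RtoC A + z)%C (f (phi n z))) as H1.
    rewrite Cmod_sym in H1.
    pose proof (Cmod_split (RtoC A) (- z)%C) as H2.
    replace (RtoC A - - z)%C with (RtoC A + z)%C in H2 by ring.
    rewrite Cmod_opp, Cmod_R, Rabs_right in H2 by (unfold A; pose proof (pos_INR kL); pose proof (pos_INR kJ); lra).
    unfold A in *. lra.
  - intros z w Hz Hw Heq. specialize (Hkd z w Hz Hw).
    pose proof (Happ z ltac:(auto)) as Ha. pose proof (Happ w ltac:(auto)) as Hb.
    rewrite Heq in Ha.
    pose proof (Cmod_split (w - z)%C (RtoC A + w - f (phi n w))%C) as H.
    replace (w - z - (RtoC A + w - f (phi n w)))%C with (f (phi n w) - (RtoC A + z))%C in H by ring.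
    rewrite (Cmod_sym (RtoC A + w)) in H. lra.
Qed.
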